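(* Let $\phi$ be a nonautonomous random dynamical system (NRDS) on $(\Omega,\mathcal{F},\mathbb{P})$ with finite state space $X$. For $t_0\le t$ let $\Gamma(t,t_0):=\{\omega\in\Omega\mid\phi(t,t_0,x_1,\omega)=\phi(t,t_0,x_2,\omega)\text{ for all }x_1,x_2\in X\}$ and for $t\in\mathbb{R}$, $\omega\in\Omega$ let $A(t,\omega):=\bigcap_{t_0\le t}\phi(t,t_0,X,\omega)$. Consider the statements: (1) There exists $p>0$ such that for any $t\in\mathbb{R}$ there exists $t_0<t$ with $\mathbb{P}(\Gamma(t,t_0))>p$. (2) For any $t\in\mathbb{R}$, $\lim_{t_0\to-\infty}\mathbb{P}(\Gamma(t,t_0))=1$. (3) For any $t\in\mathbb{R}$, $\mathbb{P}(\{\omega\in\Omega\mid \phi(t,t_0,X,\omega)\text{ is a singleton for some }t_0<t\})=1$. (4) For all $t\in\mathbb{R}$ the sets $A(t,\omega)$ are singletons for almost all $\omega\in\Omega$. Then (2), (3), (4) are equivalent to each other and imply (1). If in addition the solutions are stochastically independent on non-overlapping intervals, i.e. $\phi(t,t_0,x,\cdot)$ is independent of $\phi(s,s_0,x,\cdot)$ whenever $[t_0,t)\cap[s_0,s)=\emptyset$, then (1) is equivalent to (2)–(4). If, moreover, the $t_0$ in (1) can be chosen such that $t-t_0$ is bounded uniformly in $t$, then the convergence in (2) has an exponential rate, and the singletons $A(t,\omega)$ also provide a global random forward attractor.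
   Context: Let $\mathbb{R}^2_{\ge}:=\{(t,s)\in\mathbb{R}^2\mid t\ge s\}$. A map $\phi:\mathbb{R}^2_\ge\times X\times\Omega\to X$ ($X$ a Polish space, here finite with the discrete topology) is an NRDS if (i) it is $(\mathcal{B}(\mathbb{R}^2_\ge)\times\mathcal{B}(X)\times\mathcal{F},\mathcal{B}(X))$-measurable; (ii) $\phi(t,t,\cdot,\omega)$ is the identity; (iii) $\phi(t,t_0,x,\omega)=\phi(t,s,\phi(s,t_0,x,\omega),\omega)$ for all $t\ge s\ge t_0$; (iv) $x\mapsto\phi(t,s,x,\omega)$ is continuous. $\phi(t,t_0,B,\omega)$ denotes the image of a set $B\subset X$. On the finite space use $d(x_1,x_2)=1$ if $x_1\neq x_2$, $0$ otherwise, and $\mathrm{dist}(A_1,A_2)=\sup_{a_1\in A_1}\inf_{a_2\in A_2}d(a_1,a_2)$. A compact nonautonomous random set $A=(A(t))_{t\in\mathbb{R}}$ (measurable subsets of $X\times\Omega$ with compact $\omega$-sections $A(t,\omega)$) that is strictly invariant, $\phi(t,t_0,A(t_0,\omega),\omega)=A(t,\omega)$ for all $t\ge t_0$ a.s., is a global random forward attractor if for each $t_0\in\mathbb{R}$, $\lim_{t\to\infty}\mathrm{dist}(\phi(t,t_0,X,\omega),A(t,\omega))=0$ a.s. *)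

(* Defs.v *)
From HB Require Import structures.
From mathcomp Require Import all_boot all_order all_algebra.
From mathcomp Require Import all_classical all_reals all_analysis.
Set Implicit Arguments. Unset Strict Implicit. Unset Printing Implicit Defensive.
Import Order.TTheory GRing.Theory Num.Theory.
Local Open Scope classical_set_scope.
Local Open Scope ring_scope.

Section NRDS.
Context {R : realType} {X : finType} {d : measure_display} {Omega : measurableType d}.
Implicit Types (phi : R -> R -> X -> Omega -> X) (P : probability Omega R).

(* NRDS axioms (i)-(iii).  (i): X is finite with the discrete sigma-algebra, so
   measurability of phi on R^2_>= x X x Omega amounts to measurability, for each
   x and each value y, of {(t,s,w) | t >= s, phi t s x w = y} in B(R^2) (x) F.
   (iv) (continuity in x) is automatic for the discrete topology on X. *)
Definition is_NRDS phi : Prop :=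
  [/\ (forall x y : X,
         measurable [set p : (R * R) * Omega |
                      p.1.2 <= p.1.1 /\ phi p.1.1 p.1.2 x p.2 = y]),
      (forall t x w, phi t t x w = x) &
      (forall t s t0 x w, t0 <= s -> s <= t ->
         phi t t0 x w = phi t s (phi s t0 x w) w)].

Definition img phi (t t0 : R) (w : Omega) : set X := range (fun x => phi t t0 x w).

Definition Gamma phi (t t0 : R) : set Omega :=
  [set w | forall x1 x2 : X, phi t t0 x1 w = phi t t0 x2 w].

Definition Aset phi (t : R) (w : Omega) : set X :=
  \bigcap_(t0 in [set t0 | t0 <= t]) img phi t t0 w.

Definition is_singleton (S : set X) : Prop := exists x, S = [set x].

Definition cond1 phi P : Prop :=
  exists p : R, 0 < p /\
    forall t : R, exists t0 : R, t0 < t /\ (p%:E < P (Gamma phi t t0))%E.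

Definition cond2 phi P : Prop :=
  forall t : R, P (Gamma phi t t0) @[t0 --> -oo] --> 1%E.

Definition cond3 phi P : Prop :=
  forall t : R,
    P [set w | exists t0 : R, t0 < t /\ is_singleton (img phi t t0 w)] = 1%E.

Definition cond4 phi P : Prop :=
  forall t : R, {ae P, forall w, is_singleton (Aset phi t w)}.

Definition cond1_unif phi P : Prop :=
  exists p T : R, 0 < p /\
    forall t : R, exists t0 : R,
      [/\ t0 < t, t - t0 <= T & (p%:E < P (Gamma phi t t0))%E].

(* Independence on non-overlapping intervals: the random maps
   phi(t,t0,.,.) and phi(s,s0,.,.) (random variables with values in X -> X,
   X finite) are independent whenever [t0,t) and [s0,s) are disjoint. *)
Definition indep_increments phi P : Prop :=
  forall t t0 s s0 : R, t0 <= t -> s0 <= s ->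
    [set r | t0 <= r < t] `&` [set r | s0 <= r < s] = set0 ->
    forall f g : X -> X,
      P ([set w | forall x, phi t t0 x w = f x] `&`
         [set w | forall x, phi s s0 x w = g x]) =
      (P [set w | forall x, phi t t0 x w = f x] *
       P [set w | forall x, phi s s0 x w = g x])%E.

Definition exp_rate phi P : Prop :=
  exists C lam : R, 0 < lam /\
    forall t t0 : R, t0 <= t ->
      (1 - P (Gamma phi t t0) <= (C * expR (- (lam * (t - t0))))%:E)%E.

Definition ddisc (x1 x2 : X) : R := if x1 == x2 then 0 else 1.

Definition hdist (A1 A2 : set X) : \bar R :=
  ereal_sup [set ereal_inf [set (ddisc a1 a2)%:E | a2 in A2] | a1 in A1].

(* Compactness of the (finite) sections is
   automatic in the finite discrete space X; measurability of A(t) as a subset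
   of X x Omega (discrete sigma-algebra on X) amounts to measurability of each
   section {w | x \in A(t,w)}. *)
Definition global_random_forward_attractor phi P (A : R -> Omega -> set X) : Prop :=
  [/\ (forall t (x : X), measurable [set w | A t w x]),
      (forall t0 : R, {ae P, forall w, forall t, t0 <= t ->
          (fun x => phi t t0 x w) @` A t0 w = A t w}) &
      (forall t0 : R, {ae P, forall w,
          hdist (img phi t t0 w) (A t w) @[t --> +oo] --> 0%E})].

End NRDS.

(* Main.v *)
Require Import Defs.
From HB Require Import structures.
From mathcomp Require Import all_boot all_order all_algebra.
From mathcomp Require Import all_classical all_reals all_analysis.
From mathcomp Require Import ring lra.
Set Implicit Arguments. Unset Strict Implicit. Unset Printing Implicit Defensive.
Import Order.TTheory GRing.Theory Num.Theory.
Local Open Scope classical_set_scope.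
Local Open Scope ring_scope.

Section H.
Context (R : realType) (X : finType) (x0 : X) (d : measure_display)
  (Omega : measurableType d) (P : probability Omega R)
  (phi : R -> R -> X -> Omega -> X) (Hphi : is_NRDS phi).

Lemma phi_id t x w : phi t t x w = x.
Proof. by case: Hphi. Qed.

Lemma cocy t s t0 x w : t0 <= s -> s <= t -> phi t t0 x w = phi t s (phi s t0 x w) w.
Proof. by case: Hphi => _ _ H; exact: H. Qed.

Lemma meas_eq t s x y : s <= t -> measurable [set w | phi t s x w = y].
Proof.
move=> st; case: Hphi => /(_ x y) H _ _.
have := measurable_xsection (t, s) H.
congr measurable; apply/seteqP; split => w /=; rewrite /xsection /= in_setE /=.
  by case.
by move=> ->.
Qed.

Lemma bigU_mem (I : eqType) (r : seq I) (F : I -> set Omega) w :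
  (\big[setU/set0]_(i <- r) F i) w <-> exists i, i \in r /\ F i w.
Proof.
elim: r => [|a r IH]; first by rewrite big_nil; split => // -[i []].
rewrite big_cons; split.
  case=> [h|/IH [i [ir Fi]]]; first by exists a; split => //; rewrite mem_head.
  by exists i; split => //; rewrite in_cons ir orbT.
move=> [i []]; rewrite in_cons => /orP[/eqP<-|ir] Fi; first by left.
by right; apply/IH; exists i.
Qed.

Lemma bigI_mem (I : eqType) (r : seq I) (F : I -> set Omega) w :
  (\big[setI/setT]_(i <- r) F i) w <-> forall i, i \in r -> F i w.
Proof.
elim: r => [|a r IH]; first by rewrite big_nil.
rewrite big_cons; split.
  by move=> [h /IH h2] i; rewrite in_cons => /orP[/eqP->|ir] //; apply: h2.
move=> H; split; first by apply: H; rewrite mem_head.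
by apply/IH => i ir; apply: H; rewrite in_cons ir orbT.
Qed.


Definition Ef t s (f : {ffun X -> X}) := [set w | forall x, phi t s x w = f x].
Definition nonconst (f : {ffun X -> X}) := [exists x1, exists x2, f x1 != f x2].
Definition flist := [seq f <- enum {ffun X -> X} | nonconst f].
Definition UE t s := \big[setU/set0]_(f <- flist) Ef t s f.

Lemma Ef_meas t s f : s <= t -> measurable (Ef t s f).
Proof.
move=> st.
have -> : Ef t s f = \big[setI/setT]_(x <- enum X) [set w | phi t s x w = f x].
  apply/seteqP; split => w.
    by move=> H; apply/bigI_mem => x _; apply: H.
  by move/bigI_mem => H x; apply: H; rewrite mem_enum.
by apply: bigsetI_measurable => x _; exact: meas_eq.
Qed.

Lemma Ef_disj t s f g : f != g -> Ef t s f `&` Ef t s g = set0.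
Proof.
move=> fg; apply/seteqP; split => // w [H1 H2]; move: fg => /negP; apply.
by apply/eqP/ffunP => x; rewrite -H1 -H2.
Qed.

Lemma nGammaE t s : ~` Gamma phi t s = UE t s.
Proof.
apply/seteqP; split => w.
  move=> nG; apply/bigU_mem; exists [ffun x => phi t s x w]; split; last first.
    by move=> x; rewrite ffunE.
  rewrite mem_filter mem_enum andbT; apply/existsP.
  apply: contrapT => H; apply: nG => x1 x2; apply: contrapT => ne; apply: H.
  by exists x1; apply/existsP; exists x2; rewrite !ffunE; apply/eqP.
move/bigU_mem => [f [] + Hf]; rewrite mem_filter => /andP[/existsP[x1 /existsP[x2 ne]] _].
by move=> G; move: ne; rewrite -!Hf (G x1 x2) eqxx.
Qed.

Lemma Gamma_meas t s : s <= t -> measurable (Gamma phi t s).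
Proof.
move=> st; rewrite -[Gamma _ _ _]setCK nGammaE; apply: measurableC.
by apply: bigsetU_measurable => f _; exact: Ef_meas.
Qed.


Local Open Scope ereal_scope.

Lemma PU (A B : set Omega) : measurable A -> measurable B -> A `&` B = set0 ->
  P (A `|` B) = P A + P B.
Proof. exact: measureU. Qed.

Lemma disj_U (I : eqType) (F : I -> set Omega) (r : seq I) (A : set Omega) :
  (forall j, j \in r -> A `&` F j = set0) -> A `&` (\big[setU/set0]_(j <- r) F j) = set0.
Proof.
move=> H; apply/seteqP; split => // w [Aw /bigU_mem [j [jr Fj]]].
by rewrite -(H j jr); split.
Qed.

Lemma indep1 (J : eqType) (A : set Omega) (F : J -> set Omega) (r : seq J) :
  uniq r -> measurable A -> (forall j, measurable (F j)) ->
  (forall j j', j != j' -> F j `&` F j' = set0) ->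
  (forall j, P (A `&` F j) = P A * P (F j)) ->
  P (A `&` \big[setU/set0]_(j <- r) F j) = P A * P (\big[setU/set0]_(j <- r) F j).
Proof.
elim: r => [|j r IH]; first by rewrite big_nil setI0 measure0 mule0.
move=> /= /andP[jr ur] mA mF dF H.
have mU : measurable (\big[setU/set0]_(j <- r) F j).
  by apply: bigsetU_measurable => i _; exact: mF.
have dU : F j `&` \big[setU/set0]_(j <- r) F j = set0.
  by apply: disj_U => j' j'r; apply: dF; apply: contraNneq jr => ->.
have m1 : measurable (A `&` F j) by exact: measurableI.
have m2 : measurable (A `&` \big[setU/set0]_(j <- r) F j) by exact: measurableI.
have d12 : (A `&` F j) `&` (A `&` \big[setU/set0]_(j <- r) F j) = set0.
  by rewrite setIACA setIid dU setI0.
rewrite big_cons setIUr (PU m1 m2 d12) H IH // (PU (mF j) mU dU) ge0_muleDr //.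
Qed.

Lemma indep2 (I J : eqType) (E : I -> set Omega) (F : J -> set Omega)
  (ri : seq I) (rj : seq J) :
  uniq ri -> uniq rj -> (forall i, measurable (E i)) -> (forall j, measurable (F j)) ->
  (forall i i', i != i' -> E i `&` E i' = set0) ->
  (forall j j', j != j' -> F j `&` F j' = set0) ->
  (forall i j, P (E i `&` F j) = P (E i) * P (F j)) ->
  P ((\big[setU/set0]_(i <- ri) E i) `&` \big[setU/set0]_(j <- rj) F j) =
  P (\big[setU/set0]_(i <- ri) E i) * P (\big[setU/set0]_(j <- rj) F j).
Proof.
move=> + urj mE mF dE dF H.
elim: ri => [|i r IH]; first by rewrite big_nil set0I measure0 mul0e.
move=> /= /andP[ir ur].
have mU : measurable (\big[setU/set0]_(i <- r) E i).
  by apply: bigsetU_measurable => k _; exact: mE.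
have mV : measurable (\big[setU/set0]_(j <- rj) F j).
  by apply: bigsetU_measurable => k _; exact: mF.
have dU : E i `&` \big[setU/set0]_(i <- r) E i = set0.
  by apply: disj_U => j' j'r; apply: dE; apply: contraNneq ir => ->.
have m1 : measurable (E i `&` \big[setU/set0]_(j <- rj) F j) by exact: measurableI.
have m2 : measurable ((\big[setU/set0]_(i <- r) E i) `&` \big[setU/set0]_(j <- rj) F j).
  exact: measurableI.
have d12 : (E i `&` \big[setU/set0]_(j <- rj) F j) `&`
           ((\big[setU/set0]_(i <- r) E i) `&` \big[setU/set0]_(j <- rj) F j) = set0.
  by rewrite setIACA dU set0I.
rewrite big_cons setIUl (PU m1 m2 d12) IH // (indep1 _ _ _ _ (H i)) //.
by rewrite (PU (mE i) mU dU) ge0_muleDl.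
Qed.


Lemma Ple (A B : set Omega) : measurable A -> measurable B -> A `<=` B -> P A <= P B.
Proof. by move=> mA mB AB; apply: le_measure => //; rewrite inE. Qed.

Local Close Scope ereal_scope.
Lemma Gamma_mono t s s' : s' <= s -> s <= t -> Gamma phi t s `<=` Gamma phi t s'.
Proof. by move=> h1 h2 w H x1 x2; rewrite (cocy x1 w h1 h2) (cocy x2 w h1 h2); exact: H. Qed.

Lemma Gamma_mono2 t s s' : s' <= s -> s <= t -> Gamma phi s s' `<=` Gamma phi t s'.
Proof. by move=> h1 h2 w H x1 x2; rewrite (cocy x1 w h1 h2) (cocy x2 w h1 h2); congr phi; exact: H. Qed.

Lemma nGamma_step t s s' : s' <= s -> s <= t ->
  ~` Gamma phi t s' `<=` ~` Gamma phi t s `&` ~` Gamma phi s s'.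
Proof.
move=> h1 h2 w nG; split => G; apply: nG.
  exact: (Gamma_mono h1 h2).
exact: (Gamma_mono2 h1 h2).
Qed.

Lemma indep_nG (Hind : indep_increments phi P) t s s' : s' <= s -> s <= t ->
  P (~` Gamma phi t s `&` ~` Gamma phi s s') = (P (~` Gamma phi t s) * P (~` Gamma phi s s'))%E.
Proof.
move=> h1 h2; rewrite !nGammaE /UE; apply: indep2.
- by rewrite filter_uniq // enum_uniq.
- by rewrite filter_uniq // enum_uniq.
- by move=> f; exact: Ef_meas.
- by move=> f; exact: Ef_meas.
- by move=> f g; exact: Ef_disj.
- by move=> f g; exact: Ef_disj.
move=> f g; apply: (Hind t s s s' h2 h1) => //.
apply/seteqP; split => // r [/andP[r1 _] /andP[_ r2]].
by move: (lt_le_trans r2 r1); rewrite ltxx.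
Qed.

Definition pr (A : set Omega) : R := fine (P A).

Lemma PE A : measurable A -> P A = (pr A)%:E.
Proof. by move=> mA; rewrite /pr fineK // fin_num_measure. Qed.

Lemma pr_ge0 A : 0 <= pr A.
Proof. by rewrite /pr fine_ge0 // measure_ge0. Qed.

Lemma pr_le1 A : measurable A -> pr A <= 1.
Proof. by move=> mA; rewrite -lee_fin -PE // probability_le1. Qed.

Lemma prC A : measurable A -> pr (~` A) = 1 - pr A.
Proof.
move=> mA; apply/eqP; rewrite -(@eqe R) -PE; last exact: measurableC.
by rewrite probability_setC // PE // EFinB.
Qed.

Lemma pr_le A B : measurable A -> measurable B -> A `<=` B -> pr A <= pr B.
Proof. by move=> mA mB AB; rewrite -lee_fin -!PE // Ple. Qed.

Lemma pr_step (Hind : indep_increments phi P) t s s' : s' <= s -> s <= t ->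
  pr (~` Gamma phi t s') <= pr (~` Gamma phi t s) * pr (~` Gamma phi s s').
Proof.
move=> h1 h2.
have m1 := measurableC (Gamma_meas (le_trans h1 h2)).
have m2 := measurableC (Gamma_meas h2).
have m3 := measurableC (Gamma_meas h1).
rewrite -lee_fin EFinM -!PE //.
rewrite -indep_nG //; apply: Ple => //; first exact: measurableI.
exact: nGamma_step.
Qed.


Lemma chain (Hind : indep_increments phi P) (p : R) (B : R -> R -> Prop)
  (Q : nat -> R -> R -> Prop)
  (Q0 : forall t, Q 0%N t t) (QS : forall n t s s', Q n t s -> B s s' -> Q n.+1 t s')
  (H : forall t, exists t0, [/\ t0 < t, B t t0 & (p%:E < P (Gamma phi t t0))%E]) :
  forall n t, exists s, [/\ s <= t, Q n t s & pr (~` Gamma phi t s) <= (1 - p) ^+ n].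
Proof.
elim=> [|n IH] t.
  exists t; split => //; rewrite expr0; apply: pr_le1; apply: measurableC.
  exact: Gamma_meas.
have [s [st Qs hs]] := IH t.
have [s' [s's Bs' hp]] := H s.
exists s'; split.
- exact: le_trans (ltW s's) st.
- exact: QS Qs Bs'.
apply: le_trans (pr_step Hind (ltW s's) st) _.
rewrite exprSr; apply: ler_pM => //; [exact: pr_ge0|exact: pr_ge0|].
have mG : measurable (Gamma phi s s') by exact: Gamma_meas (ltW s's).
rewrite prC //; move: hp; rewrite PE // lte_fin; lra.
Qed.

Lemma cond2_suff :
  (forall t eps, 0 < eps -> exists s, s <= t /\ pr (~` Gamma phi t s) <= eps) ->
  cond2 phi P.
Proof.
move=> H t; apply/fine_cvgP; split.
  exists t; split; first exact: num_real.
  move=> s st /=; rewrite fin_num_measure //; exact: Gamma_meas (ltW st).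
apply/cvgrPdist_le => eps eps0.
have [s [st hs]] := H t eps eps0.
exists s; split; first exact: num_real.
move=> s' s's /=.
have s't : s' <= t by exact: ltW (lt_le_trans s's st).
have ms' : measurable (Gamma phi t s') := Gamma_meas s't.
have h1 := prC ms'.
have h2 : pr (~` Gamma phi t s') <= pr (~` Gamma phi t s).
  apply: pr_le; [exact: measurableC|exact/measurableC/Gamma_meas|].
  by move=> w nG G; apply: nG; exact: (Gamma_mono (ltW s's) st).
rewrite -/(pr _) ger0_norm; last by rewrite subr_ge0 pr_le1.
lra.
Qed.


Lemma nle (x : R) : - `|x| <= x.
Proof. by have := ler_norm (- x); rewrite normrN; lra. Qed.

Lemma cond2_cond1 : cond2 phi P -> cond1 phi P.
Proof.
move=> H; exists (4^-1); split; first by rewrite invr_gt0.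
move=> t; have := H t; move/fine_cvgP => [[M1 [_ HM1]] /cvgrPdist_le H2].
have h2 : (0 : R) < 2^-1 by rewrite invr_gt0.
have [M2 [_ HM2]] := H2 _ h2.
pose s := - (`|M1| + `|M2| + `|t|) - 1.
have n1 := nle M1; have n2 := nle M2; have n3 := nle t.
have p1 := normr_ge0 M1; have p2 := normr_ge0 M2; have p3 := normr_ge0 t.
have st : s < t by rewrite /s; lra.
exists s; split => //.
rewrite PE; last exact: Gamma_meas (ltW st).
rewrite lte_fin; have := HM2 s; rewrite /s => /(_ ltac:(lra)) /=.
rewrite -/(pr _) ler_norml => /andP[h3 h4].
have : (4^-1 : R) < 2^-1 by rewrite ltf_pV2 ?posrE //; lra.
lra.
Qed.

Definition G t n := Gamma phi t (t - n.+1%:R).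
Definition E3 t := [set w | exists t0, t0 < t /\ is_singleton (img phi t t0 w)].

Lemma G_meas t n : measurable (G t n).
Proof. by apply: Gamma_meas; have := ler0n R n.+1; lra. Qed.

Lemma sing_Gamma t t0 w : is_singleton (img phi t t0 w) <-> Gamma phi t t0 w.
Proof.
have hx x : img phi t t0 w (phi t t0 x w) by exists x.
split.
  by move=> [a Ha] x1 x2; have := hx x1; have := hx x2; rewrite Ha /= => -> ->.
move=> HG; exists (phi t t0 x0 w); apply/seteqP; split => y.
  by move=> [x _ <-]; exact: HG.
by move=> /= ->; exact: hx.
Qed.

Lemma E3_eq t : E3 t = \bigcup_n G t n.
Proof.
apply/seteqP; split => w.
  move=> [t0 [t0t /sing_Gamma HG]]; exists (Num.truncn (t - t0)) => //.
  have := truncnS_gt (t - t0) => h.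
  by apply: (Gamma_mono _ (ltW t0t) HG); lra.
move=> [n _ HG]; exists (t - n.+1%:R); split; last exact/sing_Gamma.
by have := ler0n R n; rewrite -addn1 natrD; lra.
Qed.

Lemma Gcvg t : (fun n => P (G t n)) @ \oo --> P (E3 t).
Proof.
rewrite E3_eq; apply: nondecreasing_cvg_mu.
- by move=> n; exact: G_meas.
- by apply: bigcupT_measurable => n; exact: G_meas.
move=> n m nm; rewrite subsetEset; apply: Gamma_mono.
  by move: nm; rewrite -ltnS -(ler_nat R) => h; apply: lerB.
by rewrite lerBlDr lerDl.
Qed.

Lemma seq_to_cond2 t : (fun n => P (G t n)) @ \oo --> 1%E ->
  forall eps, 0 < eps -> exists s, s <= t /\ pr (~` Gamma phi t s) <= eps.
Proof.
move/fine_cvgP => [_ /cvgrPdist_le H] eps e0.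
have [N _ HN] := H eps e0.
exists (t - N.+1%:R); split; first by have := ler0n R N.+1; lra.
have := HN N (leqnn N); rewrite /= -/(pr _) /G => h.
rewrite prC; last exact: G_meas.
by apply: le_trans h; exact: ler_norm.
Qed.

Lemma cond2_to_seq : cond2 phi P -> forall t, (fun n => P (G t n)) @ \oo --> 1%E.
Proof.
move=> H t; have := H t; move/fine_cvgP => [_ /cvgrPdist_le H2].
apply/fine_cvgP; split.
  by exists 0%N => // n _; rewrite /= fin_num_measure //; exact: G_meas.
apply/cvgrPdist_le => eps e0.
have [M [_ HM]] := H2 eps e0.
exists (Num.truncn (t - M)) => // n /= Nn.
apply: HM; have := truncnS_gt (t - M).
by move: Nn; rewrite -ltnS -(ler_nat R); lra.
Qed.

Lemma cond23 : cond2 phi P <-> cond3 phi P.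
Proof.
split.
  move=> H t; have h1 := Gcvg (t:=t); have h2 := cond2_to_seq H t.
  exact: (cvg_unique (@ereal_hausdorff R) h1 h2).
move=> H; apply: cond2_suff => t; apply: seq_to_cond2.
by have := Gcvg (t:=t); rewrite H.
Qed.


Definition fimg t s w : {set X} := [set phi t s x w | x : X].

Lemma fimgP t s w y : y \in fimg t s w <-> img phi t s w y.
Proof.
split; first by move/imsetP => [x _ ->]; exists x.
by move=> [x _ <-]; apply/imsetP; exists x.
Qed.

Lemma img_mono t s s' w : s' <= s -> s <= t -> img phi t s' w `<=` img phi t s w.
Proof. by move=> h1 h2 y [x _ <-]; exists (phi s s' x w) => //; rewrite -cocy. Qed.

Lemma img_of_fimg t a b w : fimg t a w = fimg t b w -> img phi t a w = img phi t b w.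
Proof.
move=> E; apply/seteqP; split => y /fimgP hy; apply/fimgP.
  by rewrite -E.
by rewrite E.
Qed.

Lemma proper_step t s w : s <= t ->
  ~ (forall s', s' <= s -> fimg t s' w = fimg t s w) ->
  exists s', s' <= s /\ (#|fimg t s' w| < #|fimg t s w|)%N.
Proof.
move=> st /existsNP [s' /not_implyP [s's ne]]; exists s'; split => //.
apply: proper_card; rewrite finset.properEneq; apply/andP; split; first by apply/eqP.
by apply/fintype.subsetP => y /fimgP h; apply/fimgP; exact: img_mono h.
Qed.

Lemma stab_aux t w k : forall s, s <= t -> (#|fimg t s w| <= k)%N ->
  exists s0, s0 <= t /\ forall s', s' <= s0 -> fimg t s' w = fimg t s0 w.
Proof.
elim: k => [|k IH] s st hk;
  have [stab|nstab] := pselect (forall s', s' <= s -> fimg t s' w = fimg t s w);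
  try by exists s.
  by have [s' [_ lt]] := proper_step st nstab; move: lt; rewrite ltnNge (leq_trans hk).
have [s' [s's lt]] := proper_step st nstab.
by apply: (IH s'); [exact: le_trans s's st| rewrite -ltnS (leq_trans lt)].
Qed.

Lemma stab t w : exists s, s <= t /\ forall s', s' <= s -> img phi t s' w = Aset phi t w.
Proof.
have [s0 [s0t H]] := @stab_aux t w #|fimg t t w| t (le_refl t) (leqnn _).
exists s0; split => // s' s's; rewrite (img_of_fimg (H s' s's)).
apply/seteqP; split => y.
  move=> hy t1 /= t1t; case: (leP t1 s0) => h.
    by rewrite (img_of_fimg (H t1 h)).
  exact: img_mono (ltW h) t1t _ hy.
by move=> hy; exact: hy s0 s0t.
Qed.

Lemma Aset_of_img t t0 w a : t0 <= t -> img phi t t0 w = [set a] -> Aset phi t w = [set a].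
Proof.
move=> t0t Ha; have [s [st H]] := stab t w.
pose s1 := s - `|s| - `|t0| - 1.
have n1 := ler_norm s; have n2 := nle t0; have p1 := normr_ge0 s; have p2 := normr_ge0 t0.
have s1s : s1 <= s by rewrite /s1; lra.
have s1t0 : s1 <= t0 by rewrite /s1; lra.
rewrite -(H s1 s1s); apply/seteqP; split => y.
  by move=> hy; have := img_mono s1t0 t0t hy; rewrite Ha.
have hb : img phi t s1 w (phi t s1 x0 w) by exists x0.
move=> /= ->; have := img_mono s1t0 t0t hb; rewrite Ha /= => E.
by rewrite -E.
Qed.

Lemma Aset_sing t w : is_singleton (Aset phi t w) <-> E3 t w.
Proof.
split.
  move=> [a Ha]; have [s [st H]] := stab t w.
  exists (s - 1); split; first by lra.
  by exists a; rewrite H //; lra.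
move=> [t0 [t0t [a Ha]]]; exists a; exact: Aset_of_img (ltW t0t) Ha.
Qed.

Lemma E3_meas t : measurable (E3 t).
Proof. by rewrite E3_eq; apply: bigcupT_measurable => n; exact: G_meas. Qed.

Lemma cond34 : cond3 phi P <-> cond4 phi P.
Proof.
have SE t : [set w | is_singleton (Aset phi t w)] = E3 t.
  by apply/seteqP; split => w /Aset_sing.
split.
  move=> H t; exists (~` E3 t); split.
  - exact/measurableC/E3_meas.
  - have mE := E3_meas t.
    have := H t; rewrite /E3 -/(E3 t) PE // => -[h].
    by rewrite PE; [rewrite prC // h subrr|exact/measurableC].
  - by rewrite SE.
move=> H t; have [N [mN PN sub]] := H t.
rewrite SE in sub.
have mE := E3_meas t.
have pN : pr N = 0 by move: PN; rewrite PE // => -[].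
have h1 : pr (~` E3 t) <= pr N by apply: pr_le => //; exact: measurableC.
have h2 := prC mE; have h3 := pr_ge0 (~` E3 t).
rewrite PE //; congr EFin; lra.
Qed.


Lemma small_pow (q eps : R) : 0 <= q -> q < 1 -> 0 < eps -> exists n, q ^+ n <= eps.
Proof.
move=> q0 q1 e0.
have : `|q| < 1 by rewrite ger0_norm.
move/cvg_expr/cvgrPdist_le => /(_ eps e0) [N _ HN]; exists N.
by have := HN N (leqnn N); rewrite /= sub0r normrN ger0_norm // exprn_ge0.
Qed.

Lemma p_lt1 (p : R) t t0 : t0 < t -> (p%:E < P (Gamma phi t t0))%E -> p < 1.
Proof.
move=> t0t; have mG := Gamma_meas (ltW t0t).
rewrite PE // lte_fin => h; have := pr_le1 mG; lra.
Qed.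

Lemma part4 : indep_increments phi P -> cond1 phi P -> cond2 phi P.
Proof.
move=> Hind [p [p0 Hp]].
have p1 : p < 1 by have [t0 [t0t h]] := Hp 0; exact: p_lt1 t0t h.
apply: cond2_suff => t eps e0.
have [n hn] := @small_pow (1 - p) eps ltac:(lra) ltac:(lra) e0.
have H : forall t, exists t0, [/\ t0 < t, True & (p%:E < P (Gamma phi t t0))%E].
  by move=> t1; have [t0 [h1 h2]] := Hp t1; exists t0.
have [s [st _ hs]] := @chain Hind p (fun _ _ => True) (fun _ _ _ => True)
  (fun _ => I) (fun _ _ _ _ _ _ => I) H n t.
by exists s; split => //; apply: le_trans hs hn.
Qed.

Lemma chainT (Hind : indep_increments phi P) (p T : R)
  (Hp : forall t, exists t0, [/\ t0 < t, t - t0 <= T & (p%:E < P (Gamma phi t t0))%E]) :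
  forall n t, exists s, [/\ s <= t, t - n%:R * T <= s & pr (~` Gamma phi t s) <= (1 - p) ^+ n].
Proof.
apply: (@chain Hind p (fun s s' => s - s' <= T) (fun n t s => t - n%:R * T <= s)) => //.
  by move=> t; rewrite mul0r subr0.
by move=> n t s s' h1 h2; rewrite -addn1 natrD mulrDl mul1r; lra.
Qed.

Lemma nGamma_le t t0 s : t0 <= s -> s <= t ->
  pr (~` Gamma phi t t0) <= pr (~` Gamma phi t s).
Proof.
move=> h1 h2; apply: pr_le.
- exact/measurableC/Gamma_meas/(le_trans h1 h2).
- exact/measurableC/Gamma_meas.
by move=> w nG G; apply: nG; exact: (Gamma_mono h1 h2).
Qed.

Lemma part5_exp (Hind : indep_increments phi P) : cond1_unif phi P -> exp_rate phi P.
Proof.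
move=> [p [T [p0 Hp]]].
have [p1 T0] : p < 1 /\ 0 < T.
  have [t0 [t0t tT h]] := Hp 0; split; [exact: p_lt1 t0t h|lra].
pose q := 1 - p; pose L := ln q.
have q0 : 0 < q by rewrite /q; lra.
have L0 : L < 0 by apply: ln_lt0; rewrite /q; apply/andP; split; lra.
exists q^-1, (- L / T); split; first by rewrite divr_gt0 // oppr_gt0.
move=> t t0 t0t.
have mG := Gamma_meas t0t.
rewrite PE // -EFinB lee_fin -prC //.
pose y := (t - t0) / T.
have y0 : 0 <= y by rewrite /y divr_ge0 //; lra.
pose n := Num.truncn y.
have hn1 : n%:R <= y by rewrite /n truncn_le.
have hn2 : y < n.+1%:R by exact: truncnS_gt.
have [s [st hs1 hs2]] := chainT Hind Hp n t.
have t0s : t0 <= s.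
  have : n%:R * T <= t - t0 by rewrite -ler_pdivlMr.
  lra.
apply: le_trans (nGamma_le t0s st) _; apply: le_trans hs2 _.
rewrite -/q.
have -> : q ^+ n = expR (n%:R * L) by rewrite expRM_natl /L lnK // posrE.
have -> : q^-1 = expR (- L) by rewrite expRN /L lnK // posrE.
rewrite -expRD ler_expR.
have -> : - (- L / T * (t - t0)) = L * y.
  by rewrite /y; ring.
move: hn2; rewrite -addn1 natrD => hn2.
nra.
Qed.


Lemma img_meas t s x : s <= t -> measurable [set w | img phi t s w x].
Proof.
move=> st.
have -> : [set w | img phi t s w x] =
    \big[setU/set0]_(y <- enum X) [set w | phi t s y w = x].
  apply/seteqP; split => w.
    by move=> [y _ h]; apply/bigU_mem; exists y; rewrite mem_enum.
  by move/bigU_mem => [y [_ h]]; exists y.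
by apply: bigsetU_measurable => y _; exact: meas_eq.
Qed.

Lemma Aset_meas t x : measurable [set w | Aset phi t w x].
Proof.
have -> : [set w | Aset phi t w x] = \bigcap_n [set w | img phi t (t - n%:R) w x].
  apply/seteqP; split => w.
    move=> hA n _; apply: (hA (t - n%:R)) => /=.
    have := ler0n R n; lra.
  move=> h t1 /= t1t; pose n := (Num.truncn (t - t1)).+1.
  have hn : t - t1 < n%:R by exact: truncnS_gt.
  have h1 : t - n%:R <= t1 by lra.
  exact: (img_mono h1 t1t (h n I)).
apply: bigcapT_measurable => n; apply: img_meas; have := ler0n R n; lra.
Qed.

Lemma Aset_inv t0 w t : t0 <= t ->
  (fun x => phi t t0 x w) @` Aset phi t0 w = Aset phi t w.
Proof.
move=> t0t.
have [s1 [s1t0 H1]] := stab t0 w; have [s2 [s2t H2]] := stab t w.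
pose s := s1 - `|s1| - `|s2| - 1.
have n1 := ler_norm s1; have n2 := nle s2; have p1 := normr_ge0 s1; have p2 := normr_ge0 s2.
have ss1 : s <= s1 by rewrite /s; lra.
have ss2 : s <= s2 by rewrite /s; lra.
have st0 : s <= t0 := le_trans ss1 s1t0.
rewrite -(H1 s ss1) -(H2 s ss2); apply/seteqP; split => y.
  by move=> [z [x _ <-] <-]; exists x => //; rewrite (cocy x w st0 t0t).
move=> [x _ <-]; exists (phi t0 s x w); first by exists x.
by rewrite (cocy x w st0 t0t).
Qed.

Lemma hdist11 (a : X) : hdist (R:=R) [set a] [set a] = 0%E.
Proof. by rewrite /hdist !image_set1 ereal_inf1 ereal_sup1 /ddisc eqxx. Qed.

Lemma part5_attr (Hind : indep_increments phi P) : cond1_unif phi P ->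
  global_random_forward_attractor phi P (Aset phi).
Proof.
move=> [p [T [p0 Hp]]].
have [p1 T0] : p < 1 /\ 0 < T.
  have [t0 [t0t tT h]] := Hp 0; split; [exact: p_lt1 t0t h|lra].
split.
- by move=> t x; exact: Aset_meas.
- by move=> t0; apply: aeW => w t t0t; exact: Aset_inv.
move=> t0.
have hM n : t0 <= t0 + n%:R * T.
  by have := mulr_ge0 (ler0n R n) (ltW T0); lra.
pose N := \bigcap_n ~` Gamma phi (t0 + n%:R * T) t0.
have mN : measurable N.
  by apply: bigcapT_measurable => n; exact/measurableC/Gamma_meas.
exists N; split => //.
  have hN n : pr N <= (1 - p) ^+ n.
    have [s [st hs1 hs2]] := chainT Hind Hp n (t0 + n%:R * T).
    have t0s : t0 <= s by lra.
    apply: le_trans (le_trans (nGamma_le t0s st) hs2).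
    apply: pr_le => //; first exact/measurableC/Gamma_meas.
    by move=> w /(_ n I).
  have He e : 0 < e -> pr N <= e.
    move=> e0; have [n hn] := @small_pow (1 - p) e ltac:(lra) ltac:(lra) e0.
    exact: le_trans (hN n) hn.
  rewrite PE //; congr EFin; apply/eqP; rewrite eq_le pr_ge0 andbT.
  rewrite leNgt; apply/negP => h.
  have h2 : 0 < pr N / 2 by rewrite divr_gt0.
  have := He _ h2; lra.
move=> w /= nprop n _ HG; apply: nprop.
apply: cvg_near_cst; exists (t0 + n%:R * T); split; first exact: num_real.
move=> t1 ht1.
have HG1 : Gamma phi t1 t0 w by exact: (Gamma_mono2 (hM n) (ltW ht1) HG).
have [a Ha] := (sing_Gamma t1 t0 w).2 HG1.
have t0t1 : t0 <= t1 by apply: le_trans (hM n) (ltW ht1).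
by rewrite Ha (Aset_of_img t0t1 Ha) hdist11.
Qed.

End H.

Theorem theorem9 (R : realType) (X : finType) (x0 : X)
  (d : measure_display) (Omega : measurableType d)
  (P : probability Omega R) (phi : R -> R -> X -> Omega -> X)
  (Hphi : is_NRDS phi) :
  [/\ (cond2 phi P <-> cond3 phi P),
      (cond3 phi P <-> cond4 phi P),
      (cond2 phi P -> cond1 phi P),
      (indep_increments phi P -> cond1 phi P -> cond2 phi P) &
      (indep_increments phi P -> cond1_unif phi P ->
         exp_rate phi P /\ global_random_forward_attractor phi P (Aset phi))].
Proof.
have H1 := @cond23 R X x0 d Omega P phi Hphi.
have H2 := @cond34 R X x0 d Omega P phi Hphi.
have H3 := @cond2_cond1 R X d Omega P phi Hphi.
have H4 := @part4 R X d Omega P phi Hphi.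
have H5 := @part5_exp R X d Omega P phi Hphi.
have H6 := @part5_attr R X x0 d Omega P phi Hphi.
split => //.
by move=> Hind H; split; [exact: H5|exact: H6].
Qed.
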